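(* Let $n\ge p\ge1$, $E=\begin{bmatrix} I_{p}\\ \mathbf{0}_{(n-p)\times p}\end{bmatrix}$, $T_\theta=\operatorname{diag}(T_{\theta_1},\dots,T_{\theta_p})$ and $T_\phi$ diagonal with strictly positive diagonal entries, $Q=\operatorname{diag}(q_1,\dots,q_p)$ with $q_i>0$, $r\in\mathbb{R}^p$, $L^{com}\in\mathbb{R}^{p\times p}$ the Laplacian of a balanced, strongly connected weighted directed graph on $\{1,\dots,p\}$, $\overline y\in\mathbb{R}^n$, $h(x)=(h_1(x_1),\dots,h_n(x_n))^T$ with $h_i$ continuously differentiable and strictly increasing, and $g(\theta)=(g_1(\theta_1),\dots,g_p(\theta_p))^T$ with each $g_i:\mathbb{R}\to\mathbb{R}$ continuously differentiable and strictly increasing. Consider the system $$T_\theta\dot\theta=-E^T(h(x)-\overline y)-(g(\theta)-\phi),\qquad T_\phi\dot\phi=g(\theta)-\phi-QL^{com}(Q\phi+r),$$ with input $-h(x)$ (where $x(\cdot)$ is an input signal) and output $Eg(\theta)$. Let $\overline x\in\mathbb{R}^n$ satisfy $h(\overline x)=\overline y$, and let $(\overline\theta,\overline\phi)$ satisfy $$\mathbf{0}=-E^T(h(\overline x)-\overline y)-(g(\overline\theta)-\overline\phi),\qquad \mathbf{0}=(g(\overline\theta)-\overline\phi)-QL^{com}(Q\overline\phi+r).$$ Then the system is incrementally passive with respect to $(\overline\theta,\overline\phi)$: the function $$V_2=\sum_{i=1}^pT_{\theta_i}\int_{\overline\theta_i}^{\theta_i}(g_i(y)-g_i(\overline\theta_i))\,dy+\tfrac12(\phi-\overline\phi)^TT_\phi(\phi-\overline\phi)$$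 is radially unbounded and satisfies along the solutions of the system $$\dot V_2=-(g(\theta)-\phi)^T(g(\theta)-\phi)-(\phi-\overline\phi)^TQL^{com}Q(\phi-\overline\phi)-(g(\theta)-g(\overline\theta))^TE^T(h(x)-h(\overline x)).$$
   Context: A weighted directed graph is balanced if at every node the weighted in-degree equals the weighted out-degree; its Laplacian is $L^{com}=D-A$ with $A$ the weighted adjacency matrix and $D$ the diagonal matrix of weighted out-degrees. Incremental passivity of $\dot z=F(z,v)$, $w=H(z)$ with respect to a constant steady state means the existence of a continuously differentiable radially unbounded function $V$ with $\dot V\le (w-\overline w)^T(v-\overline v)$ along solutions. *)

(* Defs.v *)
From Stdlib Require Import Reals.
From Coquelicot Require Import Coquelicot.
From HB Require Import structures.
From mathcomp Require Import all_boot all_order all_algebra.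
From mathcomp Require Import Rstruct.

Set Implicit Arguments.
Unset Strict Implicit.
Unset Printing Implicit Defensive.
Import Order.TTheory GRing.Theory Num.Theory.
Local Open Scope ring_scope.

Definition Emat (n p : nat) : 'M[R]_(n, p) :=
  \matrix_(i < n, j < p) ((i : nat) == (j : nat))%:R.

Definition vmap (m : nat) (f : 'I_m -> R -> R) (v : 'cV[R]_m) : 'cV[R]_m :=
  \col_i f i (v i 0).

Definition dotv (m : nat) (u v : 'cV[R]_m) : R := (u^T *m v) 0 0.

(* weighted digraph on 'I_p given by its weighted adjacency matrix A,
   A i j = weight of the edge i -> j (0 if absent) *)
Definition out_deg (p : nat) (A : 'M[R]_p) (i : 'I_p) : R := \sum_j A i j.
Definition in_deg (p : nat) (A : 'M[R]_p) (i : 'I_p) : R := \sum_j A j i.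
Definition nonneg_weights (p : nat) (A : 'M[R]_p) : Prop :=
  forall i j, 0 <= A i j.
Definition balanced (p : nat) (A : 'M[R]_p) : Prop :=
  forall i, out_deg A i = in_deg A i.
Definition strongly_connected (p : nat) (A : 'M[R]_p) : Prop :=
  forall i j : 'I_p, connect (fun a b => 0 < A a b) i j.
Definition laplacian (p : nat) (A : 'M[R]_p) : 'M[R]_p :=
  diag_mx (\row_i out_deg A i) - A.

Definition strictly_increasing (f : R -> R) : Prop :=
  forall a b : R, (a < b)%R -> (f a < f b)%R.
Definition cont_diff (f : R -> R) : Prop :=
  (forall x, ex_derive f x) /\ (forall x, continuous (Derive f) x).

Definition V2 (p : nat) (tth tph : 'rV[R]_p) (g : 'I_p -> R -> R)
  (thb phb th ph : 'cV[R]_p) : R :=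
  \sum_(i < p) tth 0 i *
      RInt (fun y => g i y - g i (thb i 0)) (thb i 0) (th i 0)
  + 1 / 2 * dotv (ph - phb) (diag_mx tph *m (ph - phb)).

Definition V2dot (n p : nat) (q : 'rV[R]_p) (A : 'M[R]_p)
  (h : 'I_n -> R -> R) (g : 'I_p -> R -> R) (xbar : 'cV[R]_n)
  (thb phb th ph : 'cV[R]_p) (x : 'cV[R]_n) : R :=
  - dotv (vmap g th - ph) (vmap g th - ph)
  - dotv (ph - phb) (diag_mx q *m laplacian A *m diag_mx q *m (ph - phb))
  - dotv (vmap g th - vmap g thb)
         ((Emat n p)^T *m (vmap h x - vmap h xbar)).

(* Main.v *)
Require Import Defs.
From Stdlib Require Import Reals Lra.
From Coquelicot Require Import Coquelicot.
From HB Require Import structures.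
From mathcomp Require Import all_boot all_order all_algebra.
From mathcomp Require Import Rstruct.
Import Order.TTheory GRing.Theory Num.Theory.
Local Open Scope R_scope.

Lemma exR (f : R -> R) k a b : (forall x, continuous f x) ->
  ex_RInt (fun y => f y - k) a b.
Proof.
move=> Hc; apply: ex_RInt_continuous => z _.
apply: (continuous_minus (fun y => f y) (fun _ => k)); first exact: Hc.
exact: continuous_const.
Qed.

Lemma I_lower (f : R -> R) (a : R) : (forall x y, x < y -> f x < f y) ->
  (forall x, continuous f x) ->
  0 < Rmin (f (a+1) - f a) (f a - f (a-1)) /\
  forall z, 0 <= RInt (fun y => f y - f a) a z /\
   Rmin (f (a+1) - f a) (f a - f (a-1)) * (Rabs (z - a) - 1)
     <= RInt (fun y => f y - f a) a z.
Proof.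
move=> Hi Hc.
have h1 := Hi a (a+1) ltac:(lra).
have h2 := Hi (a-1) a ltac:(lra).
set c := Rmin _ _.
have cp : 0 < c by apply: Rmin_glb_lt; lra.
have cl1 : c <= f (a+1) - f a by apply: Rmin_l.
have cl2 : c <= f a - f (a-1) by apply: Rmin_r.
split => // z.
have E := fun b => exR f (f a) a b Hc.
destruct (Rle_dec a z) as [Haz|Haz].
- have I0 : 0 <= RInt (fun y => f y - f a) a z.
    apply: RInt_ge_0 => //; last move=> x Hx; try exact: E. have := Hi a x ltac:(lra). lra.
  split => //.
  destruct (Rle_dec (a+1) z) as [Hz|Hz].
  + rewrite -(RInt_Chasles _ a (a+1) z); try exact: E; try apply: exR => //.
    have I1 : 0 <= RInt (fun y => f y - f a) a (a+1).
      apply: RInt_ge_0; [lra| exact: E|] => x Hx. have := Hi a x ltac:(lra). lra.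
    have I2 : RInt (fun _ => f (a+1) - f a) (a+1) z <= RInt (fun y => f y - f a) (a+1) z.
      apply: RInt_le; [lra|apply: ex_RInt_const|apply: exR => //|] => x Hx.
      have := Hi (a+1) x ltac:(lra). lra.
    rewrite RInt_const in I2. rewrite /scal /= /mult /= in I2.
    rewrite /Hierarchy.plus /=. rewrite Rabs_right; last lra.
    have : c * (z - a - 1) <= (z - (a+1)) * (f (a+1) - f a).
      nra.
    lra.
  + rewrite Rabs_right; last lra.
    have : c * (z - a - 1) <= 0. have : z - a - 1 <= 0 by lra. nra.
    lra.
- have E' : ex_RInt (fun y => f y - f a) z a by apply: exR.
  rewrite -(opp_RInt_swap _ z a) //. rewrite /Hierarchy.opp /=.
  have I0 : RInt (fun y => f y - f a) z a <= 0.
    have : RInt (fun _ => 0) z a = 0.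
      rewrite RInt_const /scal /= /mult /=. ring.
    move=> <-. apply: RInt_le; [lra|exact: E'|apply: ex_RInt_const|] => x Hx.
    have := Hi x a ltac:(lra). lra.
  split; first lra.
  rewrite Rabs_left; last lra.
  destruct (Rle_dec z (a-1)) as [Hz|Hz].
  + rewrite -(RInt_Chasles _ z (a-1) a) //; try apply: exR => //.
    have I1 : RInt (fun y => f y - f a) (a-1) a <= 0.
      have : RInt (fun _ => 0) (a-1) a = 0.
        rewrite RInt_const /scal /= /mult /=. ring.
      move=> <-. apply: RInt_le; [lra|apply: exR => //|apply: ex_RInt_const|] => x Hx.
      have := Hi x a ltac:(lra). lra.
    have I2 : RInt (fun y => f y - f a) z (a-1) <= RInt (fun _ => f (a-1) - f a) z (a-1).
      apply: RInt_le; [lra|apply: exR => //|apply: ex_RInt_const|] => x Hx.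
      have := Hi x (a-1) ltac:(lra). lra.
    rewrite RInt_const in I2. rewrite /scal /= /mult /= in I2.
    rewrite /Hierarchy.plus /=.
    have : c * (a - z - 1) <= (a - 1 - z) * (f a - f (a-1)).
      nra.
    lra.
  + have : c * (- (z - a) - 1) <= 0. have : - (z - a) - 1 <= 0 by lra. nra.
    lra.
Qed.

Definition cf (f : R -> R) (a : R) := Rmin (f (a+1) - f a) (f a - f (a-1)).
Definition half : R := 1/2.
Lemma halfE : 1/2 = half. Proof. by []. Qed.
Lemma half_pos : 0 < half. Proof. rewrite /half; lra. Qed.
From mathcomp Require Import ring lra.
Local Open Scope ring_scope.
Lemma sumD' (I : Type) (r : seq I) (F G : I -> R) :
  \sum_(i <- r) (F i + G i) = \sum_(i <- r) F i + \sum_(i <- r) G i.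
Proof. exact: big_split. Qed.

Lemma dotvE m (u v : 'cV[R]_m) : dotv u v = \sum_i u i 0 * v i 0.
Proof. rewrite /dotv !mxE; apply: eq_bigr => i _; rewrite !mxE. by []. Qed.

Lemma dotv_tr m k (M : 'M[R]_(m,k)) u v : dotv (M *m u) v = dotv u (M^T *m v).
Proof. by rewrite /dotv trmx_mul mulmxA. Qed.

Lemma dotv_ge0 m (u : 'cV[R]_m) : 0 <= dotv u u.
Proof. rewrite dotvE; apply: sumr_ge0 => i _; exact: sqr_ge0. Qed.

Lemma lap_entry p (A : 'M[R]_p) (z : 'cV[R]_p) i :
  (laplacian A *m z) i 0 = out_deg A i * z i 0 - \sum_j A i j * z j 0.
Proof.
rewrite /laplacian mulmxBl mul_diag_mx !mxE; congr (_ - _); try (apply: eq_bigr => j _; by rewrite !mxE).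
Qed.

Lemma lap_psd p (A : 'M[R]_p) (z : 'cV[R]_p) :
  nonneg_weights A -> balanced A -> 0 <= dotv z (laplacian A *m z).
Proof.
move=> HA Hb.
rewrite dotvE.
under eq_bigr => i _ do rewrite lap_entry.
set S1 := \sum_i \sum_j A i j * (z i 0)^+2.
set S2 := \sum_i \sum_j A i j * (z j 0)^+2.
set P := \sum_i \sum_j A i j * (z i 0 * z j 0).
have E1 : \sum_i z i 0 * (out_deg A i * z i 0 - \sum_j A i j * z j 0) = S1 - P.
  rewrite /S1 /P -sumrB; apply: eq_bigr => i _.
  rewrite mulrBr /out_deg mulr_suml !mulr_sumr -sumrB -sumrB;
  apply: eq_bigr => j _; ring.
have E2 : S1 = S2.
  rewrite /S1 /S2 [RHS]exchange_big /=.
  transitivity (\sum_i out_deg A i * (z i 0)^+2).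
    by apply: eq_bigr => i _; rewrite /out_deg mulr_suml.
  rewrite (eq_bigr (fun i => in_deg A i * (z i 0)^+2)); last by move=> i _; rewrite Hb.
  by apply: eq_bigr => i _; rewrite /in_deg mulr_suml.
have E3 : S1 + S2 - 2 * P = \sum_i \sum_j A i j * (z i 0 - z j 0)^+2.
  rewrite /S1 /S2 /P mulr_sumr -sumD' -sumrB; apply: eq_bigr => i _.
  rewrite mulr_sumr -sumD' -sumrB; apply: eq_bigr => j _; ring.
have H0 : 0 <= \sum_i \sum_j A i j * (z i 0 - z j 0)^+2.
  apply: sumr_ge0 => i _; apply: sumr_ge0 => j _; apply: mulr_ge0 => //; exact: sqr_ge0.
rewrite E1; rewrite -E3 E2 in H0; lra.
Qed.
Lemma isd_sum (I : Type) (r : seq I) (f : I -> R -> R) (df : I -> R) t :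
  (forall i, is_derive (f i) t (df i)) ->
  is_derive (fun s => \sum_(i <- r) f i s) t (\sum_(i <- r) df i).
Proof.
move=> H; elim: r => [|a r IH].
  apply: (@is_derive_ext R_AbsRing R_NormedModule (fun _ : R => (0 : R))) => [s|]; first by rewrite big_nil.
  rewrite big_nil; exact: is_derive_const.
apply: (@is_derive_ext R_AbsRing R_NormedModule (fun s : R => f a s + \sum_(i <- r) f i s)) => [s|].
  by rewrite big_cons.
rewrite big_cons; exact: is_derive_plus.
Qed.

Lemma isd_add (f g : R -> R) t df dg : is_derive f t df -> is_derive g t dg ->
  is_derive (fun s => f s + g s) t (df + dg).
Proof. exact: is_derive_plus. Qed.

Lemma isd_sub (f g : R -> R) t df dg : is_derive f t df -> is_derive g t dg ->
  is_derive (fun s => f s - g s) t (df - dg).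
Proof. exact: is_derive_minus. Qed.

Lemma isd_mul (f g : R -> R) t df dg : is_derive f t df -> is_derive g t dg ->
  is_derive (fun s => f s * g s) t (df * g t + f t * dg).
Proof. move=> H1 H2; apply: is_derive_mult => //; exact: Rmult_comm. Qed.

Lemma isd_cst (k : R) t : is_derive (fun _ => k) t 0.
Proof. exact: is_derive_const. Qed.

Lemma isd_F (f : R -> R) (k a : R) (th : R -> R) t dth :
  (forall x, continuous f x) -> is_derive th t dth ->
  is_derive (fun s => RInt (fun y => f y - k) a (th s)) t (dth * (f (th t) - k)).
Proof.
move=> Hc Hth.
apply: (is_derive_comp (fun z => RInt (fun y => f y - k) a z)) => //.
apply: (is_derive_RInt (fun y => f y - k)).
  apply: filter_forall => b; apply: RInt_correct; exact: exR.
apply: (continuous_minus (fun y => f y) (fun _ => k)); first exact: Hc.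
exact: continuous_const.
Qed.
Lemma isd_scal (f : R -> R) (k : R) t df : is_derive f t df ->
  is_derive (fun s => k * f s) t (k * df).
Proof. exact: is_derive_scal. Qed.

Lemma dotvN m (u v : 'cV[R]_m) : dotv u (- v) = - dotv u v.
Proof. by rewrite /dotv mulmxN mxE. Qed.

Lemma le_sum_term p (F : 'I_p -> R) i : (forall j, 0 <= F j) -> F i <= \sum_j F j.
Proof. move=> H; rewrite (bigD1 i) //= lerDl; apply: sumr_ge0 => j _; exact: H. Qed.

Lemma cont_of (f : R -> R) : cont_diff f -> forall x, continuous f x.
Proof. by case=> H _ x; apply: ex_derive_continuous. Qed.

Lemma part3 (n p : nat) (q : 'rV[R]_p) (A : 'M[R]_p)
  (h : 'I_n -> R -> R) (g : 'I_p -> R -> R) (xbar : 'cV[R]_n)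
  (thb phb th ph : 'cV[R]_p) (x : 'cV[R]_n) :
  nonneg_weights A -> balanced A ->
  V2dot q A h g xbar thb phb th ph x <=
      dotv ((Emat n p) *m vmap g th - (Emat n p) *m vmap g thb)
           (- vmap h x - - vmap h xbar).
Proof.
move=> HA Hb.
rewrite /V2dot -mulmxBr dotv_tr.
have -> : - vmap h x - - vmap h xbar = - (vmap h x - vmap h xbar) by rewrite opprD.
rewrite mulmxN dotvN.
have HX := dotv_ge0 _ (vmap g th - ph).
have HY : 0 <= dotv (ph - phb) (diag_mx q *m laplacian A *m diag_mx q *m (ph - phb)).
  rewrite -!mulmxA -{1}(tr_diag_mx q) -dotv_tr; exact: lap_psd.
move: HX HY.
move: (dotv (vmap g th - ph) _) => X; move: (dotv (ph - phb) _) => Y.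
move: (dotv (vmap g th - vmap g thb) _) => Z.
move=> HX HY; rewrite ?RminusE ?RoppE; lra.
Qed.
Lemma part2 (n p : nat) (tth tph q : 'rV[R]_p)
  (Htth : forall i, 0 < tth 0 i) (Htph : forall i, 0 < tph 0 i)
  (r : 'cV[R]_p) (A : 'M[R]_p) (ybar : 'cV[R]_n)
  (h : 'I_n -> R -> R) (g : 'I_p -> R -> R) (Hg1 : forall i, cont_diff (g i))
  (xbar : 'cV[R]_n) (Hxbar : vmap h xbar = ybar)
  (thb phb : 'cV[R]_p)
  (Heq1 : 0 = - ((Emat n p)^T *m (vmap h xbar - ybar)) - (vmap g thb - phb))
  (Heq2 : 0 = (vmap g thb - phb)
              - diag_mx q *m laplacian A *m (diag_mx q *m phb + r))
  (th ph : R -> 'cV[R]_p) (x : R -> 'cV[R]_n) (t : R)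
  (dth dph : 'cV[R]_p) :
      (forall i, is_derive (fun s => th s i 0) t (dth i 0)) ->
      (forall i, is_derive (fun s => ph s i 0) t (dph i 0)) ->
      diag_mx tth *m dth =
        - ((Emat n p)^T *m (vmap h (x t) - ybar)) - (vmap g (th t) - ph t) ->
      diag_mx tph *m dph =
        (vmap g (th t) - ph t)
        - diag_mx q *m laplacian A *m (diag_mx q *m ph t + r) ->
      is_derive (fun s => V2 tth tph g thb phb (th s) (ph s)) t
        (V2dot q A h g xbar thb phb (th t) (ph t) (x t)).
Proof.
move=> Hdth Hdph H3 H4.
have Hphb : vmap g thb = phb.
  move/eqP: Heq1; rewrite -Hxbar subrr mulmx0 oppr0 sub0r eq_sym oppr_eq0 subr_eq0.
  by move/eqP.
have H0 : diag_mx q *m laplacian A *m (diag_mx q *m phb + r) = 0.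
  move/eqP: Heq2; rewrite Hphb subrr sub0r eq_sym oppr_eq0; by move/eqP.
have Hw : diag_mx q *m laplacian A *m (diag_mx q *m ph t + r) =
          diag_mx q *m laplacian A *m diag_mx q *m (ph t - phb).
  rewrite -[LHS]subr0 -[X in _ - X]H0 -mulmxBr.
  have -> : (diag_mx q *m ph t + r) - (diag_mx q *m phb + r) = diag_mx q *m (ph t - phb).
    by rewrite mulmxBr opprD addrACA subrr addr0.
  by rewrite mulmxA.
rewrite Hw in H4. rewrite -Hxbar in H3.
pose D := \sum_i tth 0 i * (dth i 0 * (g i (th t i 0) - g i (thb i 0)))
  + 1/2 * \sum_i ((dph i 0 - 0) * (tph 0 i * (ph t i 0 - phb i 0))
                  + (ph t i 0 - phb i 0) * (tph 0 i * (dph i 0 - 0))).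
have HD : is_derive (fun s => V2 tth tph g thb phb (th s) (ph s)) t D.
  apply: (@is_derive_ext R_AbsRing R_NormedModule (fun s =>
     \sum_i tth 0 i * RInt (fun y => g i y - g i (thb i 0)) (thb i 0) (th s i 0)
     + 1/2 * \sum_i (ph s i 0 - phb i 0) * (tph 0 i * (ph s i 0 - phb i 0)))).
    move=> s; rewrite /V2 dotvE mul_diag_mx; congr (_ + _ * _).
    by apply: eq_bigr => i _; rewrite !mxE.
  apply: isd_add.
    apply: isd_sum => i; apply: isd_scal; apply: isd_F; last exact: Hdth.
    exact: cont_of.
  apply: isd_scal; apply: isd_sum => i; apply: isd_mul.
    apply: isd_sub; [exact: Hdph|exact: isd_cst].
  apply: isd_scal; apply: isd_sub; [exact: Hdph|exact: isd_cst].
suff -> : V2dot q A h g xbar thb phb (th t) (ph t) (x t) = D by [].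
rewrite /V2dot /D.
move: H3 H4.
move: ((Emat n p)^T *m (vmap h (x t) - vmap h xbar)) => e.
move: (diag_mx q *m laplacian A *m diag_mx q *m (ph t - phb)) => w.
move=> H3 H4.
rewrite !dotvE ?RminusE ?RoppE.
rewrite -sumrN -sumrB -sumrB mulr_sumr -sumD'.
apply: eq_bigr => i _.
have E3 : tth 0 i * dth i 0 = - e i 0 - (g i (th t i 0) - ph t i 0).
  by have := congr1 (fun M : 'cV[R]_p => M i 0) H3; rewrite mul_diag_mx !mxE.
have E4 : tph 0 i * dph i 0 = (g i (th t i 0) - ph t i 0) - w i 0.
  by have := congr1 (fun M : 'cV[R]_p => M i 0) H4; rewrite mul_diag_mx !mxE.
have Ep : phb i 0 = g i (thb i 0) by rewrite -Hphb mxE.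
have t0 := lt0r_neq0 (Htth i). have t1 := lt0r_neq0 (Htph i).
have Edth : dth i 0 = (- e i 0 - (g i (th t i 0) - ph t i 0)) / tth 0 i.
  by rewrite -E3 [tth 0 i * _]mulrC mulfK.
have Edph : dph i 0 = ((g i (th t i 0) - ph t i 0) - w i 0) / tph 0 i.
  by rewrite -E4 [tph 0 i * _]mulrC mulfK.
rewrite Edth Edph !mxE Ep.
field; by rewrite t0 t1.
Qed.
Lemma Ilow (f : R -> R) (a : R) : strictly_increasing f -> cont_diff f ->
  0 < cf f a /\ forall z, 0 <= RInt (fun y => Rminus (f y) (f a)) a z /\
   cf f a * (`|z - a| - 1) <= RInt (fun y => Rminus (f y) (f a)) a z.
Proof.
move=> Hi Hc.
have Hi' : forall x y : R, Rlt x y -> Rlt (f x) (f y).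
  by move=> x y /RltP h; apply/RltP; apply: Hi.
have [h1 h2] := I_lower f a Hi' (cont_of _ Hc).
split; first by apply/RltP.
move=> z; have [h3 h4] := h2 z; split; first by apply/RleP.
by move/RleP: h4; rewrite RmultE RminusE RabsE RminusE.
Qed.
Lemma part1 (p : nat) (tth tph : 'rV[R]_p)
  (Htth : forall i, 0 < tth 0 i) (Htph : forall i, 0 < tph 0 i)
  (g : 'I_p -> R -> R) (Hg1 : forall i, cont_diff (g i))
  (Hg2 : forall i, strictly_increasing (g i)) (thb phb : 'cV[R]_p) :
  forall M : R, exists K : R, forall th ph : 'cV[R]_p,
      (exists i, K < `|th i 0| \/ K < `|ph i 0|) ->
      M < V2 tth tph g thb phb th ph.
Proof.
move=> M.
pose c i := cf (g i) (thb i 0).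
have cpos j : 0 < c j by have [] := Ilow _ (thb j 0) (Hg2 j) (Hg1 j).
have Il j z := (Ilow _ (thb j 0) (Hg2 j) (Hg1 j)).2 z.
pose Kt i := `|thb i 0| + 1 + `|M| / (tth 0 i * c i)
           + (`|phb i 0| + 1 + `|M| / (half * tph 0 i)).
have hp : 0 < half by apply/RltP; exact: half_pos.
have Kt0 j : 0 <= Kt j.
  have a1 : 0 <= `|M| / (tth 0 j * c j).
    apply: divr_ge0 => //; apply: ltW; apply: mulr_gt0 => //.
  have a2 : 0 <= `|M| / (half * tph 0 j).
    apply: divr_ge0 => //; apply: ltW; apply: mulr_gt0 => //.
  rewrite /Kt; have := normr_ge0 (thb j 0); have := normr_ge0 (phb j 0). lra.
exists (\sum_i Kt i) => th ph [i Hi].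
have KiK : Kt i <= \sum_i Kt i by apply: le_sum_term.
rewrite /V2 dotvE mul_diag_mx halfE RplusE RmultE.
set S1 := \sum_(i0 < p) _.
set S2 := \sum_(i0 < p) _.
pose F j z := RInt (fun y => Rminus (g j y) (g j (thb j 0))) (thb j 0) z.
have T1 j : 0 <= tth 0 j * F j (th j 0).
  apply: mulr_ge0; [exact: ltW | exact: (Il j _).1].
have T2 j : 0 <= (ph - phb) j 0 * (\matrix_(i1, j0) (tph 0 i1 * (ph - phb) i1 j0)) j 0.
  rewrite !mxE; rewrite mulrCA; apply: mulr_ge0; [exact: ltW|].
  rewrite -expr2; exact: sqr_ge0.
have S1ge : 0 <= S1 by apply: sumr_ge0 => j _; exact: T1.
have S2ge : 0 <= S2 by apply: sumr_ge0 => j _; exact: T2.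
have S1i : tth 0 i * F i (th i 0) <= S1.
  have := le_sum_term _ (fun j => tth 0 j * F j (th j 0)) i T1. move=> H; exact: H.
have S2i := le_sum_term _ (fun j => (ph - phb) j 0 * (\matrix_(i1, j0) (tph 0 i1 * (ph - phb) i1 j0)) j 0) i T2.
rewrite -/S2 !mxE in S2i.
have HM := ler_norm M.
have t0 := Htth i. have c0 := cpos i. have tp0 := Htph i.
case: Hi => Hi.
- set m' := `|M| / (tth 0 i * c i).
  have hn := ler_normD (th i 0 - thb i 0) (thb i 0). rewrite subrK in hn.
  set u := `|th i 0 - thb i 0| - 1.
  have hu : m' < u.
    have z1 := normr_ge0 (phb i 0).
    have z2 : 0 <= `|M| / (half * tph 0 i) by apply: divr_ge0 => //; apply: ltW; apply: mulr_gt0.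
    rewrite /Kt -/m' in KiK. rewrite /u. lra.
  have h1 : tth 0 i * (c i * u) <= tth 0 i * F i (th i 0).
    by apply: ler_wpM2l; [exact: ltW | exact: (Il i _).2].
  have h2 : 0 < (tth 0 i * c i) * (u - m') by apply: mulr_gt0; [apply: mulr_gt0|rewrite subr_gt0].
  have h3 : (tth 0 i * c i) * m' = `|M|.
    rewrite /m' mulrC divfK //; apply: lt0r_neq0; exact: mulr_gt0.
  have h4 : 0 <= half * S2 by apply: mulr_ge0 => //; exact: ltW.
  lra.
- set m' := `|M| / (half * tph 0 i).
  have hn := ler_normD (ph i 0 - phb i 0) (phb i 0). rewrite subrK in hn.
  set d := `|ph i 0 - phb i 0|.
  have hd : 1 + m' < d.
    have z1 := normr_ge0 (thb i 0).
    have z2 : 0 <= `|M| / (tth 0 i * c i) by apply: divr_ge0 => //; apply: ltW; apply: mulr_gt0.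
    rewrite /Kt -/m' in KiK. rewrite /d. lra.
  have Hdd : d * d = (ph i 0 - phb i 0) * (ph i 0 - phb i 0).
    by rewrite -!expr2 real_normK ?num_real.
  have m0 : 0 <= m' by apply: divr_ge0 => //; apply: ltW; apply: mulr_gt0.
  have f1 : 0 <= (half * tph 0 i * d) * (d - 1).
    apply: mulr_ge0; last lra. apply: mulr_ge0; last exact: normr_ge0.
    apply: mulr_ge0; exact: ltW.
  have f2 : 0 < (half * tph 0 i) * (d - 1 - m') by apply: mulr_gt0; [apply: mulr_gt0|lra].
  have f3 : (half * tph 0 i) * m' = `|M|.
    rewrite /m' mulrC divfK //; apply: lt0r_neq0; exact: mulr_gt0.
  have f4 : 0 < half * tph 0 i by exact: mulr_gt0.
  have f5 : 0 <= half * (S2 - (ph i 0 - phb i 0) * (tph 0 i * (ph i 0 - phb i 0))).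
    apply: mulr_ge0; [exact: ltW| lra].
  have f6 : (ph i 0 - phb i 0) * (tph 0 i * (ph i 0 - phb i 0)) = tph 0 i * (d * d).
    rewrite Hdd; ring.
  rewrite f6 in f5.
  have S1ge' : 0 <= S1 := S1ge.
  lra.
Qed.

Theorem lemma7 (n p : nat) (Hp : (1 <= p)%N) (Hpn : (p <= n)%N)
  (tth tph q : 'rV[R]_p)
  (Htth : forall i, 0 < tth 0 i) (Htph : forall i, 0 < tph 0 i)
  (Hq : forall i, 0 < q 0 i)
  (r : 'cV[R]_p) (A : 'M[R]_p)
  (HA : nonneg_weights A) (Hbal : balanced A) (Hsc : strongly_connected A)
  (ybar : 'cV[R]_n)
  (h : 'I_n -> R -> R) (Hh1 : forall i, cont_diff (h i))
  (Hh2 : forall i, strictly_increasing (h i))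
  (g : 'I_p -> R -> R) (Hg1 : forall i, cont_diff (g i))
  (Hg2 : forall i, strictly_increasing (g i))
  (xbar : 'cV[R]_n) (Hxbar : vmap h xbar = ybar)
  (thb phb : 'cV[R]_p)
  (Heq1 : 0 = - ((Emat n p)^T *m (vmap h xbar - ybar)) - (vmap g thb - phb))
  (Heq2 : 0 = (vmap g thb - phb)
              - diag_mx q *m laplacian A *m (diag_mx q *m phb + r)) :
  (* V_2 is radially unbounded *)
  (forall M : R, exists K : R, forall th ph : 'cV[R]_p,
      (exists i, K < `|th i 0| \/ K < `|ph i 0|) ->
      M < V2 tth tph g thb phb th ph)
  /\
  (* along solutions: dV_2/dt = V2dot *)
  (forall (th ph : R -> 'cV[R]_p) (x : R -> 'cV[R]_n) (t : R)
          (dth dph : 'cV[R]_p),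
      (forall i, is_derive (fun s => th s i 0) t (dth i 0)) ->
      (forall i, is_derive (fun s => ph s i 0) t (dph i 0)) ->
      diag_mx tth *m dth =
        - ((Emat n p)^T *m (vmap h (x t) - ybar)) - (vmap g (th t) - ph t) ->
      diag_mx tph *m dph =
        (vmap g (th t) - ph t)
        - diag_mx q *m laplacian A *m (diag_mx q *m ph t + r) ->
      is_derive (fun s => V2 tth tph g thb phb (th s) (ph s)) t
        (V2dot q A h g xbar thb phb (th t) (ph t) (x t)))
  /\
  (* incremental passivity inequality: input v = -h(x), output w = E g(theta) *)
  (forall (th ph : 'cV[R]_p) (x : 'cV[R]_n),
      V2dot q A h g xbar thb phb th ph x <=
      dotv ((Emat n p) *m vmap g th - (Emat n p) *m vmap g thb)
           (- vmap h x - - vmap h xbar)).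
Proof.
split; first exact: part1.
split; last by move=> th ph x; exact: part3.
move=> th ph x t dth dph H1 H2 H3 H4.
exact: (@part2 n p tth tph q Htth Htph r A ybar h g Hg1 xbar Hxbar thb phb Heq1 Heq2 th ph x t dth dph H1 H2 H3 H4).
Qed.
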